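(* Let $\hat A\in\mathbb{R}^{n\times n}$, $\hat B\in\mathbb{R}^{n\times m}$, and $\rho>0$. Let $Q\in\mathbb{R}^{n\times n}$, $R\in\mathbb{R}^{m\times m}$ with $Q\succ0$, $R\succ0$, factored as $\begin{bmatrix}Q&0\\0&R\end{bmatrix}=\begin{bmatrix}C_c^\top\\ (D_c^u)^\top\end{bmatrix}\begin{bmatrix}C_c & D_c^u\end{bmatrix}$ with $C_c\in\mathbb{R}^{n_c\times n}$, $D_c^u\in\mathbb{R}^{n_c\times m}$, $n_c=n+m$. Define $C_z=\begin{bmatrix}\rho I_n\\ 0_{m\times n}\end{bmatrix}$ and $D_z^u=\begin{bmatrix}0_{n\times m}\\ \rho I_m\end{bmatrix}$. Suppose there exist a symmetric $X\in\mathbb{R}^{n\times n}$ with $X\succ0$, a matrix $M\in\mathbb{R}^{m\times n}$, and a scalar $\beta>0$ such that $$\begin{bmatrix} -\beta I_{n+m} & 0 & 0 & C_zX-D_z^uM & 0\\ * & -I_{n_c} & 0 & C_cX-D_c^uM & 0\\ * & * & -X & \hat AX-\hat BM & \beta I_n\\ * & * & * & -X & 0\\ * & * & * & * & -\beta I_n \end{bmatrix}\preceq 0,$$ where $*$ denotes the blocks determined by symmetry. Set $K=MX^{-1}$ and $P=X^{-1}$. Then for every $\Delta A\in\mathbb{R}^{n\times n}$, $\Delta B\in\mathbb{R}^{n\times m}$ with $\|[\Delta A,\ \Delta B]\|\le\rho$, $$\big(\hat A+\Delta A-(\hat B+\Delta B)K\big)^\top P\big(\hat A+\Delta A-(\hat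 B+\Delta B)K\big)-P+Q+K^\top RK\preceq 0,$$ and consequently, for every initial state $x_0\in\mathbb{R}^n$, the trajectory of $x_{t+1}=(\hat A+\Delta A)x_t+(\hat B+\Delta B)u_t$ with $u_t=-Kx_t$ satisfies $$J(x_0)=\lim_{N\to\infty}\sum_{t=0}^{N}\left(x_t^\top Qx_t+u_t^\top Ru_t\right)\le x_0^\top Px_0 .$$ That is, $u_t=-Kx_t$ is a stabilizing guaranteed cost controller for the uncertain system with guaranteed cost $x_0^\top P x_0$.
   Context: $\|\cdot\|$ on matrices denotes the Frobenius norm. The uncertain system $x_{t+1}=(\hat A+\Delta A)x_t+(\hat B+\Delta B)u_t$ arises from an identified model $(\hat A,\hat B)$ of an unknown linear system whose identification error $[\Delta A,\Delta B]$ is only known to satisfy $\|[\Delta A,\Delta B]\|\le\rho$. $I_k$ denotes the $k\times k$ identity and $\preceq 0$ means negative semidefinite. *)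

(* Defs.v *)
From HB Require Import structures.
From mathcomp Require Import all_boot all_order all_algebra.
From mathcomp Require Import all_classical all_reals all_analysis.
Set Implicit Arguments. Unset Strict Implicit. Unset Printing Implicit Defensive.
Import Order.TTheory GRing.Theory Num.Theory.
Local Open Scope ring_scope.

Section Defs.
Variable R : realType.

Definition qform k (A : 'M[R]_k) (v : 'cV[R]_k) : R := (v^T *m A *m v) 0 0.

Definition sym_mx k (A : 'M[R]_k) : Prop := A^T = A.

Definition posdef k (A : 'M[R]_k) : Prop :=
  sym_mx A /\ forall v : 'cV[R]_k, v != 0 -> 0 < qform A v.

Definition negsemidef k (A : 'M[R]_k) : Prop :=
  sym_mx A /\ forall v : 'cV[R]_k, qform A v <= 0.

Definition frob p q (A : 'M[R]_(p, q)) : R :=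
  Num.sqrt (\sum_(i < p) \sum_(j < q) A i j ^+ 2).

Fixpoint traj n m (A : 'M[R]_n) (B : 'M[R]_(n, m)) (K : 'M[R]_(m, n))
    (x0 : 'cV[R]_n) (t : nat) : 'cV[R]_n :=
  match t with
  | 0 => x0
  | t'.+1 => let xt := traj A B K x0 t' in A *m xt + B *m (- (K *m xt))
  end.

Definition cost_partial n m (A : 'M[R]_n) (B : 'M[R]_(n, m)) (K : 'M[R]_(m, n))
    (Q : 'M[R]_n) (Rw : 'M[R]_m) (x0 : 'cV[R]_n) (N : nat) : R :=
  \sum_(t < N.+1)
     (qform Q (traj A B K x0 t) + qform Rw (- (K *m traj A B K x0 t))).

(* The 5x5 block LMI matrix of the statement (blocks below the diagonal
   determined by symmetry).  Block sizes: n+m, n+m (= n_c), n, n, n. *)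
Definition lmi_matrix n m (Ah : 'M[R]_n) (Bh : 'M[R]_(n, m))
    (Cz Cc : 'M[R]_(n + m, n)) (Dz Dc : 'M[R]_(n + m, m))
    (X : 'M[R]_n) (M : 'M[R]_(m, n)) (beta : R)
  : 'M[R]_((n + m) + ((n + m) + (n + (n + n)))) :=
  let E1 := Cz *m X - Dz *m M in
  let E2 := Cc *m X - Dc *m M in
  let E3 := Ah *m X - Bh *m M in
  col_mx
    (row_mx (- beta%:M) (row_mx 0 (row_mx 0 (row_mx E1 0))))
  (col_mx
    (row_mx 0 (row_mx (- 1%:M) (row_mx 0 (row_mx E2 0))))
  (col_mx
    (row_mx 0 (row_mx 0 (row_mx (- X) (row_mx E3 (beta%:M)))))
  (col_mx
    (row_mx E1^T (row_mx E2^T (row_mx E3^T (row_mx (- X) 0))))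
    (row_mx 0 (row_mx 0 (row_mx (beta%:M) (row_mx 0 (- beta%:M)))))))).

End Defs.

(* Main.v *)
Require Import Defs.
From HB Require Import structures.
From mathcomp Require Import all_boot all_order all_algebra.
From mathcomp Require Import all_classical all_reals all_analysis.
From mathcomp Require Import ring lra.
Import Order.TTheory GRing.Theory Num.Theory.
Import numFieldTopology.Exports numFieldNormedType.Exports.
Local Open Scope classical_set_scope.
Local Open Scope ring_scope.

Set Implicit Arguments. Unset Strict Implicit. Unset Printing Implicit Defensive.
Section S.
Variable R : realType.
Definition ip k (u v : 'cV[R]_k) : R := (u^T *m v) 0 0.

Lemma ipE k (u v : 'cV[R]_k) : ip u v = \sum_i u i 0 * v i 0.
Proof. by rewrite /ip mxE; apply: eq_bigr => i _; rewrite mxE. Qed.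
Lemma ipC k (u v : 'cV[R]_k) : ip u v = ip v u.
Proof. by rewrite !ipE; apply: eq_bigr => i _; rewrite mulrC. Qed.
Lemma ipDr k (u v w : 'cV[R]_k) : ip u (v + w) = ip u v + ip u w.
Proof. by rewrite /ip mulmxDr mxE. Qed.
Lemma ipZr k (u v : 'cV[R]_k) a : ip u (a *: v) = a * ip u v.
Proof. by rewrite /ip -scalemxAr mxE. Qed.
Lemma ipNr k (u v : 'cV[R]_k) : ip u (- v) = - ip u v.
Proof. by rewrite /ip mulmxN mxE. Qed.
Lemma ipBr k (u v w : 'cV[R]_k) : ip u (v - w) = ip u v - ip u w.
Proof. by rewrite ipDr ipNr. Qed.
Lemma ipDl k (u v w : 'cV[R]_k) : ip (v + w) u = ip v u + ip w u.
Proof. by rewrite ipC ipDr !(ipC u). Qed.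
Lemma ipZl k (u v : 'cV[R]_k) a : ip (a *: v) u = a * ip v u.
Proof. by rewrite ipC ipZr ipC. Qed.
Lemma ipNl k (u v : 'cV[R]_k) : ip (- v) u = - ip v u.
Proof. by rewrite ipC ipNr ipC. Qed.
Lemma ipBl k (u v w : 'cV[R]_k) : ip (v - w) u = ip v u - ip w u.
Proof. by rewrite ipDl ipNl. Qed.
Lemma ip_mul p k (A : 'M[R]_(p,k)) u v : ip u (A *m v) = ip (A^T *m u) v.
Proof. by rewrite /ip trmx_mul trmxK mulmxA. Qed.
Lemma ip_mulT p k (A : 'M[R]_(k,p)) u v : ip u (A^T *m v) = ip v (A *m u).
Proof. by rewrite ip_mul trmxK ipC. Qed.
Lemma ip_ge0 k (u : 'cV[R]_k) : 0 <= ip u u.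
Proof. by rewrite ipE; apply: sumr_ge0 => i _; rewrite -expr2 sqr_ge0. Qed.
Lemma ip_col p k (a c : 'cV[R]_p) (b d : 'cV[R]_k) :
  ip (col_mx a b) (col_mx c d) = ip a c + ip b d.
Proof. by rewrite /ip tr_col_mx mul_row_col mxE. Qed.
Lemma ip0r k (u : 'cV[R]_k) : ip u 0 = 0.
Proof. by rewrite /ip mulmx0 mxE. Qed.
Lemma qformE k (A : 'M[R]_k) v : qform A v = ip v (A *m v).
Proof. by rewrite /qform /ip mulmxA. Qed.
Lemma ip_scal k (u v : 'cV[R]_k) a : ip u (a%:M *m v) = a * ip u v.
Proof. by rewrite mul_scalar_mx ipZr. Qed.

Lemma lmi_qform n m (Ah : 'M[R]_n) (Bh : 'M[R]_(n, m))
    (Cz Cc : 'M[R]_(n + m, n)) (Dz Dc : 'M[R]_(n + m, m))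
    (X : 'M[R]_n) (M : 'M[R]_(m, n)) (beta : R) a b c d e :
  qform (lmi_matrix Ah Bh Cz Cc Dz Dc X M beta)
    (col_mx a (col_mx b (col_mx c (col_mx d e)))) =
  - beta * ip a a + 2 * ip a ((Cz *m X - Dz *m M) *m d)
  - ip b b + 2 * ip b ((Cc *m X - Dc *m M) *m d)
  - ip c (X *m c) + 2 * ip c ((Ah *m X - Bh *m M) *m d) + 2 * beta * ip c e
  - ip d (X *m d) - beta * ip e e.
Proof.
rewrite qformE /lmi_matrix !mul_col_mx !mul_row_col !mul0mx !addr0 !add0r.
rewrite !ip_col !ipDr !mulNmx !ipNr !ip_scal !ip_mulT (ipC e c).
ring.
Qed.

Lemma cs_fin (I : finType) (x y : I -> R) :
  (\sum_i x i * y i) ^+ 2 <= (\sum_i x i ^+ 2) * (\sum_i y i ^+ 2).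
Proof.
set A := \sum_i x i ^+ 2; set B := \sum_i y i ^+ 2; set C := \sum_i x i * y i.
have A0 : 0 <= A by apply: sumr_ge0 => i _; rewrite sqr_ge0.
have key t : 0 <= t ^+ 2 * A - 2 * t * C + B.
  have : 0 <= \sum_i (t * x i - y i) ^+ 2 by apply: sumr_ge0 => i _; rewrite sqr_ge0.
  rewrite (eq_bigr (fun i => t ^+ 2 * x i ^+ 2 - 2 * t * (x i * y i) + y i ^+ 2)); last first.
    by move=> i _; ring.
  by rewrite big_split sumrB /= -!mulr_sumr.
have [Apos|Ale0] := ltP 0 A.
  have h := key (C / A).
  have e : (C / A) ^+ 2 * A - 2 * (C / A) * C + B = B - C ^+ 2 / A.
    by field; rewrite gt_eqF.
  by rewrite e subr_ge0 ler_pdivrMr // mulrC in h.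
have A00 : A = 0 by apply/eqP; rewrite eq_le Ale0 A0.
have x0 : forall i, x i = 0.
  move=> i; have := psumr_eq0P (P := xpredT) (F := fun i => x i ^+ 2).
  move=> /(_ (fun i _ => sqr_ge0 (x i)) A00 i isT) /eqP.
  by rewrite sqrf_eq0 => /eqP.
rewrite /C big1 ?A00; first by rewrite expr0n /= mul0r.
by move=> i _; rewrite x0 mul0r.
Qed.

Lemma young_aux (z rho u w : R) : 0 < rho -> 0 <= u -> 0 <= w ->
  z ^+ 2 <= rho ^+ 2 * (u * w) -> 2 * z <= rho * (u + w).
Proof.
move=> r0 u0 w0 h.
have h2 : 0 <= rho * (u + w) by rewrite mulr_ge0 ?addr_ge0 // ltW.
have h3 : 0 <= (u - w) ^+ 2 by rewrite sqr_ge0.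
rewrite leNgt; apply/negP => hl.
have hl2 : (rho * (u + w)) * (rho * (u + w)) < (2 * z) * (2 * z).
  by nra.
nra.
Qed.

Lemma young_mx p q (D : 'M[R]_(p, q)) (c : 'cV[R]_p) (f : 'cV[R]_q) rho beta :
  0 < rho -> 0 < beta -> \sum_i \sum_j D i j ^+ 2 <= rho ^+ 2 ->
  2 * ip c (D *m f) <= rho * (beta * ip c c + ip f f / beta).
Proof.
move=> r0 b0 hD.
have e1 : ip c (D *m f) = \sum_(k : 'I_p * 'I_q) D k.1 k.2 * (c k.1 0 * f k.2 0).
  rewrite ipE -(pair_bigA _ (fun i j => D i j * (c i 0 * f j 0))) /=; apply: eq_bigr => i _; rewrite mxE mulr_sumr.
  by apply: eq_bigr => j _; ring.
have e2 : \sum_(k : 'I_p * 'I_q) (c k.1 0 * f k.2 0) ^+ 2 = ip c c * ip f f.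
  rewrite -(pair_bigA _ (fun i j => (c i 0 * f j 0) ^+ 2)) /= !ipE mulr_suml; apply: eq_bigr => i _.
  rewrite mulr_sumr; apply: eq_bigr => j _; ring.
have e3 : \sum_(k : 'I_p * 'I_q) D k.1 k.2 ^+ 2 = \sum_i \sum_j D i j ^+ 2.
  by rewrite -(pair_bigA _ (fun i j => D i j ^+ 2)).
have cs := cs_fin (fun k : 'I_p * 'I_q => D k.1 k.2) (fun k => c k.1 0 * f k.2 0).
rewrite -e1 e2 e3 in cs.
apply: young_aux => //; first by rewrite mulr_ge0 // ?ip_ge0 // ltW.
  by rewrite divr_ge0 // ?ip_ge0 // ltW.
apply: (le_trans cs).
have -> : beta * ip c c * (ip f f / beta) = ip c c * ip f f by field; rewrite gt_eqF.
by apply: ler_wpM2r => //; rewrite mulr_ge0 // ip_ge0.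
Qed.

Lemma riccati_v n m (Ah : 'M[R]_n) (Bh : 'M[R]_(n, m)) (rho : R)
  (Q : 'M[R]_n) (Rw : 'M[R]_m)
  (Cc : 'M[R]_(n + m, n)) (Dc : 'M[R]_(n + m, m))
  (X : 'M[R]_n) (M : 'M[R]_(m, n)) (beta : R) (dA : 'M[R]_n) (dB : 'M[R]_(n, m)) (v : 'cV[R]_n) :
  0 < rho -> Q = Cc^T *m Cc -> Rw = Dc^T *m Dc -> Cc^T *m Dc = 0 ->
  X \in unitmx -> 0 < beta ->
  (forall w, qform (lmi_matrix Ah Bh
                (col_mx (rho%:M) 0) Cc (col_mx 0 (rho%:M)) Dc X M beta) w <= 0) ->
  \sum_i \sum_j (row_mx dA dB) i j ^+ 2 <= rho ^+ 2 ->
  forall K P L, K = M *m invmx X -> P = invmx X ->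
  L = Ah + dA - (Bh + dB) *m K ->
  ip (L *m v) (P *m (L *m v)) - ip v (P *m v) + ip v (Q *m v)
    + ip (K *m v) (Rw *m (K *m v)) <= 0.
Proof.
move=> r0 hQ hR hCD hXu b0 hlmi hD K P L hK hP hL.
have XP : X *m P = 1%:M by rewrite hP; exact: mulmxV.
set d := P *m v.
have Xd : X *m d = v by rewrite /d mulmxA XP mul1mx.
set y := L *m v; set c := P *m y.
have Xc : X *m c = y by rewrite /c mulmxA XP mul1mx.
have Md : M *m d = K *m v by rewrite /d hK hP mulmxA.
set f := (col_mx (rho%:M) 0 *m X - col_mx 0 (rho%:M) *m M) *m d.
set g := (Cc *m X - Dc *m M) *m d.
set h := (dA - dB *m K) *m v.
have hf : f = col_mx (rho *: v) (- (rho *: (K *m v))).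
  rewrite /f mulmxBl -!mulmxA Xd Md !mul_col_mx !mul_scalar_mx !mul0mx.
  by rewrite opp_col_mx add_col_mx oppr0 addr0 add0r.
have hh : row_mx dA dB *m f = rho *: h.
  rewrite hf mul_row_col mulmxN /h mulmxBl scalerBr -mulmxA !scalemxAr.
  done.
have hE3 : (Ah *m X - Bh *m M) *m d = y - h.
  rewrite mulmxBl -!mulmxA Xd Md /y hL /h !mulmxBl !mulmxDl -!mulmxA.
  by apply/colP => i; rewrite !mxE; ring.
have hg : g = Cc *m v - Dc *m (K *m v) by rewrite /g mulmxBl -!mulmxA Xd Md.
have hx : ip (Cc *m v) (Dc *m (K *m v)) = 0.
  by rewrite ip_mul mulmxA -(trmxK (Dc^T *m Cc)) trmx_mul trmxK hCD trmx0 mul0mx ipC ip0r.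
have hgg : ip g g = ip v (Q *m v) + ip (K *m v) (Rw *m (K *m v)).
  rewrite hg hQ hR !ipBl !ipBr hx (ipC (Dc *m _) (Cc *m _)) hx -!mulmxA !ip_mulT.
  by rewrite subr0 sub0r opprK.
have := hlmi (col_mx (beta^-1 *: f) (col_mx g (col_mx c (col_mx d c)))).
rewrite lmi_qform -/f -/g Xc Xd hE3.
have hy := young_mx (D := row_mx dA dB) c f r0 b0 hD; rewrite hh ipZr in hy.
rewrite !ipZl !ipZr ipBr (ipC c y) (ipC d v) hgg.
have e : - beta * (beta^-1 * (beta^-1 * ip f f)) + 2 * (beta^-1 * ip f f)
  = ip f f / beta by field; rewrite gt_eqF.
rewrite e.
rewrite mulrCA ler_pM2l // in hy.
move: hy; set F := ip f f / beta; set A := ip c c.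
move=> hy H; have hG : 0 <= ip f f by exact: ip_ge0.
lra.
Qed.

Lemma sym_congr p k (A : 'M[R]_(p,k)) (P : 'M[R]_p) : P^T = P ->
  (A^T *m P *m A)^T = A^T *m P *m A.
Proof. by move=> hP; rewrite !trmx_mul trmxK hP mulmxA. Qed.

Lemma sym_ric k p (L P Q : 'M[R]_k) (K : 'M[R]_(p, k)) (Rw : 'M[R]_p) :
  P^T = P -> Q^T = Q -> Rw^T = Rw ->
  (L^T *m P *m L - P + Q + K^T *m Rw *m K)^T = L^T *m P *m L - P + Q + K^T *m Rw *m K.
Proof.
move=> hP hQ hR; by rewrite !raddfD /= raddfN /= !sym_congr // hP hQ.
Qed.

Lemma disc (A B C : R) : (forall t, 0 <= B - 2 * t * C + t ^+ 2 * A) -> 0 <= A ->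
  C ^+ 2 <= B * A.
Proof.
move=> h A0; have [Apos|Ale0] := ltP 0 A.
  have := h (C / A).
  have -> : B - 2 * (C / A) * C + (C / A) ^+ 2 * A = B - C ^+ 2 / A.
    by field; rewrite gt_eqF.
  by rewrite subr_ge0 ler_pdivrMr.
have A00 : A = 0 by apply/eqP; rewrite eq_le Ale0 A0.
have [C0|Cn0] := eqVneq C 0.
  by rewrite C0 A00 expr0n /= mulr0.
have := h ((B + 1) / (2 * C)).
have -> : B - 2 * ((B + 1) / (2 * C)) * C + ((B + 1) / (2 * C)) ^+ 2 * A = -1.
  by rewrite A00; field; rewrite Cn0.
by rewrite ler0N1.
Qed.

Lemma qform_ge0 k (A : 'M[R]_k) w : posdef A -> 0 <= qform A w.
Proof.
move=> [_ hA]; have [->|w0] := eqVneq w 0.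
  by rewrite qformE mulmx0 ip0r.
exact/ltW/hA.
Qed.

Lemma posdef_unit k (A : 'M[R]_k) : posdef A -> A \in unitmx.
Proof.
move=> [_ hA]; rewrite unitmxE unitfE; apply/negP => /det0P [u u0 uA].
have := hA u^T; rewrite trmx_eq0 u0 => /(_ isT).
by rewrite /qform trmxK uA mul0mx mxE ltxx.
Qed.

Lemma coord_bound k (Q : 'M[R]_k) : posdef Q ->
  exists gam : R, forall (x : 'cV[R]_k) (i : 'I_k), x i 0 ^+ 2 <= gam * qform Q x.
Proof.
move=> hQ; have hu := posdef_unit hQ; have hs := hQ.1.
pose y i := invmx Q *m delta_mx i (0 : 'I_1).
have hy x i : ip x (Q *m y i) = x i 0.
  by rewrite /y mulmxA mulmxV // mul1mx /ip -colE !mxE.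
have cs x yv : (ip x (Q *m yv)) ^+ 2 <= qform Q x * qform Q yv.
  apply: disc; last exact: qform_ge0.
  move=> t; have := qform_ge0 (x - t *: yv) hQ.
  have -> : qform Q (x - t *: yv) =
     qform Q x - 2 * t * ip x (Q *m yv) + t ^+ 2 * qform Q yv.
    rewrite !qformE mulmxBr ipBl !ipBr -scalemxAr !ipZl !ipZr.
    have hsym : ip (Q *m x) yv = ip x (Q *m yv) by rewrite ipC ip_mul hs ipC.
    rewrite (ipC yv (Q *m x)) hsym; ring.
  done.
exists (\sum_i qform Q (y i)) => x i.
rewrite -hy (le_trans (cs x (y i))) // mulrC ler_wpM2r ?qform_ge0 //.
rewrite (bigD1 i) //= lerDl; apply: sumr_ge0 => j _; exact: qform_ge0.
Qed.
End S.

Unset Implicit Arguments.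
Theorem theorem2 (R : realType) (n m : nat)
  (Ah : 'M[R]_n) (Bh : 'M[R]_(n, m)) (rho : R)
  (Q : 'M[R]_n) (Rw : 'M[R]_m)
  (Cc : 'M[R]_(n + m, n)) (Dc : 'M[R]_(n + m, m))
  (X : 'M[R]_n) (M : 'M[R]_(m, n)) (beta : R) :
  0 < rho ->
  posdef Q -> posdef Rw ->
  block_mx Q 0 0 Rw = col_mx Cc^T Dc^T *m row_mx Cc Dc ->
  sym_mx X -> posdef X -> 0 < beta ->
  negsemidef (lmi_matrix Ah Bh
                (col_mx (rho%:M) 0) Cc (col_mx 0 (rho%:M)) Dc X M beta) ->
  let K := M *m invmx X in
  let P := invmx X in
  forall (dA : 'M[R]_n) (dB : 'M[R]_(n, m)),
    frob (row_mx dA dB) <= rho ->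
    negsemidef ((Ah + dA - (Bh + dB) *m K)^T *m P *m (Ah + dA - (Bh + dB) *m K)
                - P + Q + K^T *m Rw *m K)
    /\ forall x0 : 'cV[R]_n,
         traj (Ah + dA) (Bh + dB) K x0 @ \oo --> (0 : 'cV[R]_n)
      /\ cvgn (cost_partial (Ah + dA) (Bh + dB) K Q Rw x0)
      /\ limn (cost_partial (Ah + dA) (Bh + dB) K Q Rw x0) <= qform P x0.
Proof.
move=> r0 hQ hRw hfac hXs hX b0 hlmi K P dA dB hfrob.
have hK : K = M *m invmx X by []. have hP : P = invmx X by [].
clearbody K P.
rewrite mul_col_row in hfac.
have [hQ' h12 _ hR'] := eq_block_mx hfac.
have hXu := posdef_unit hX.
have hD : \sum_i \sum_j (row_mx dA dB) i j ^+ 2 <= rho ^+ 2.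
  move: hfrob; rewrite /frob; set S := \sum_i _ => hs.
  have S0 : 0 <= S by apply: sumr_ge0 => i _; apply: sumr_ge0 => j _; exact: sqr_ge0.
  rewrite -(sqr_sqrtr S0); have := sqrtr_ge0 S; nra.
have ric v : ip ((Ah + dA - (Bh + dB) *m K) *m v) (P *m ((Ah + dA - (Bh + dB) *m K) *m v)) - ip v (P *m v) + ip v (Q *m v)
    + ip (K *m v) (Rw *m (K *m v)) <= 0.
  exact: (riccati_v v r0 hQ' hR' (esym h12) hXu b0 hlmi.2 hD hK hP erefl).
have Psym : P^T = P by rewrite hP trmx_inv hXs.
have hQs := hQ.1; have hRs := hRw.1.
split.
  split.
    exact: sym_ric.
  move=> v; have := ric v; move: (Ah + dA - (Bh + dB) *m K) => L hv.
  rewrite qformE !mulmxDl !mulNmx !ipDr !ipNr -!mulmxA !ip_mulT.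
  by rewrite (ipC (P *m _)) (ipC (Rw *m _)).
move=> x0.
have hstep t : traj (Ah + dA) (Bh + dB) K x0 t.+1 =
    (Ah + dA - (Bh + dB) *m K) *m traj (Ah + dA) (Bh + dB) K x0 t.
  by rewrite /= mulmxN mulmxBl mulmxA.
have hx0 : traj (Ah + dA) (Bh + dB) K x0 0 = x0 by [].
rewrite /cost_partial.
move: (ric) (hstep) (hx0).
move: (Ah + dA - (Bh + dB) *m K) (traj (Ah + dA) (Bh + dB) K x0) => L x ricL hs hx.
have XP : X *m P = 1%:M by rewrite hP; exact: mulmxV.
have Pge0 u : 0 <= ip u (P *m u).
  rewrite -{1}[u]mul1mx -XP -mulmxA ipC -qformE; exact: qform_ge0.
pose V t := ip (x t) (P *m x t).
pose term t := qform Q (x t) + qform Rw (- (K *m x t)).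
have hRterm u : qform Rw (- (K *m u)) = ip (K *m u) (Rw *m (K *m u)).
  by rewrite qformE mulmxN ipNr ipNl opprK.
have hterm t : 0 <= term t by rewrite /term addr_ge0 // qform_ge0.
have hdec t : term t + V t.+1 <= V t.
  have := ricL (x t); rewrite /term /V hs hRterm qformE; lra.
pose c N := \sum_(t < N.+1) term t.
have cS N : c N.+1 = c N + term N.+1 by rewrite /c big_ord_recr.
have htel N : c N + V N.+1 <= V 0.
  elim: N => [|N IH].
    by rewrite /c big_ord1; exact: hdec.
  rewrite cS; have := hdec N.+1; lra.
have hcb N : c N <= qform P x0.
  have := htel N; have := Pge0 (x N.+1); rewrite /V qformE -hx; lra.
have hinc : nondecreasing_seq c.
  apply/nondecreasing_seqP => N; rewrite cS lerDl; exact: hterm.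
have hcv : cvgn c.
  apply: nondecreasing_is_cvgn => //; exists (qform P x0) => _ [N _ <-]; exact: hcb.
change (x @ \oo --> (0 : 'cV[R]_n) /\ cvgn c /\ limn c <= qform P x0).
split; last first.
  split => //; apply: limr_le => //; apply: nearW => N; exact: hcb.
have h1 : (fun N => c N.+1 - c N) @ \oo --> 0.
  rewrite -(subrr (limn c)); apply: cvgB => //.
  by rewrite (cvg_shiftS c).
have hq : (fun N => qform Q (x N.+1)) @ \oo --> 0.
  apply: (squeeze_cvgr _ (cvg_cst 0) h1).
  apply: nearW => N; rewrite cS addrAC subrr add0r /term qform_ge0 //=.
  by rewrite lerDl qform_ge0.
rewrite -cvg_shiftS.
have [gam hg] := coord_bound hQ.
apply/cvgrPdist_le => e e0.
have d0 : 0 < e ^+ 2 / (`|gam| + 1) by rewrite divr_gt0 ?exprn_gt0 // ltr_pwDr.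
move/cvgrPdist_le: hq => /(_ _ d0); apply: filterS => N hN.
have q0 : 0 <= qform Q (x N.+1) by exact: qform_ge0.
rewrite sub0r normrN ger0_norm // ler_pdivlMr ?ltr_pwDr // in hN.
rewrite /Num.Def.normr /= mx_normrE (bigmax_le _ (ltW e0)) //= => -[i j] _.
rewrite !mxE (ord1 j) sub0r normrN.
have hz := hg (x N.+1) i.
have hz2 : x N.+1 i 0 ^+ 2 <= e ^+ 2.
  apply: (le_trans hz); apply: le_trans hN.
  have h3 : gam * qform Q (x N.+1) <= `|gam| * qform Q (x N.+1).
    by apply: ler_wpM2r => //; exact: ler_norm.
  apply: (le_trans h3); rewrite mulrC ler_wpM2l // lerDl //.
move: hz2; set z := x N.+1 i 0 => hz2.
rewrite ler_norml; apply/andP; split; nra.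
Qed.
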